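(* For every integer $n\ge1$, \[ -\omega(n)=\sum_{\substack{m+k=n\\ m\ge1,\ k\ge0}}p_\psi(m)\,\Omega_m(k). \]
   Context: $p_\psi(n)$ is the number of relatively prime partitions of $n$, i.e. partitions of $n$ whose parts have greatest common divisor $1$. $\omega:\mathbb{Z}\to\mathbb{Z}$ is defined by $\omega(0)=1$; $\omega(m)=(-1)^j$ if $m=\frac{3j^2\pm j}{2}$ for some integer $j\ge1$; $\omega(m)=0$ otherwise (in particular for $m<0$). For $m\ge1$ and integer $k$, $\Omega_m(k)=\sum_{j\ge0}\omega(k-jm)=\omega(k)+\omega(k-m)+\omega(k-2m)+\cdots$. *)

(* Defs.v *)
From mathcomp Require Import all_boot all_order all_algebra.
Set Implicit Arguments. Unset Strict Implicit. Unset Printing Implicit Defensive.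
Import Order.TTheory GRing.Theory Num.Theory.

(* A partition of n is encoded by its multiplicity function:
   f i = number of parts equal to i.+1 (parts are in 1..n, multiplicities <= n). *)
Definition is_partition (n : nat) (f : {ffun 'I_n -> 'I_n.+1}) : bool :=
  (\sum_(i < n) i.+1 * f i)%N == n.

Definition parts_gcd (n : nat) (f : {ffun 'I_n -> 'I_n.+1}) : nat :=
  \big[gcdn/0%N]_(i < n | (0 < f i)%N) i.+1.

Definition p_psi (n : nat) : nat :=
  #|[set f : {ffun 'I_n -> 'I_n.+1} | is_partition f && (parts_gcd f == 1%N)]|.

Local Open Scope ring_scope.

Definition pent_idx (m : int) (j : nat) : bool :=
  (0 < j)%N && ((2 * m == (3 * j ^ 2 + j)%N%:Z) || (2 * m == (3 * j ^ 2 - j)%N%:Z)).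

(* omega(0) = 1; omega(m) = (-1)^j if m = (3j^2 +- j)/2 with j >= 1; else 0.
   Any such j satisfies j <= |m| (and is unique), so the search range is complete. *)
Definition omega (m : int) : int :=
  if m == 0 then 1 else
  match [pick j : 'I_(`|m|%N.+1) | pent_idx m j] with
  | Some j => (-1) ^+ (nat_of_ord j)
  | None => 0
  end.

(* Omega_m(k) = sum_{j >= 0} omega(k - j m); for k >= 0, m >= 1 the terms with
   j > k have negative argument, hence vanish. *)
Definition Omega (m : nat) (k : int) : int :=
  \sum_(0 <= j < `|k|%N.+1) omega (k - (j * m)%N%:Z).

(* Main.v *)
Require Import Defs.
From mathcomp Require Import all_boot all_order all_algebra.
From mathcomp Require Import zify ring lra.
Set Implicit Arguments. Unset Strict Implicit. Unset Printing Implicit Defensive.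
Import Order.TTheory GRing.Theory Num.Theory.
Local Open Scope ring_scope.

Definition cong (K : nat) (a b : {poly int}) := exists c, a - b = 'X^K * c.

Lemma cong_refl K a : cong K a a.
Proof. by exists 0; rewrite subrr mulr0. Qed.

Lemma cong_sym K a b : cong K a b -> cong K b a.
Proof. by case=> c h; exists (- c); rewrite mulrN -h opprB. Qed.

Lemma cong_trans K a b c : cong K a b -> cong K b c -> cong K a c.
Proof.
case=> u hu [v hv]; exists (u + v); rewrite mulrDr -hu -hv.
by rewrite addrA subrK.
Qed.

Lemma cong_mul K a b c d : cong K a b -> cong K c d -> cong K (a * c) (b * d).
Proof.
case=> u hu [v hv]; exists (a * v + u * d).
have -> : a * c - b * d = a * (c - d) + (a - b) * d by ring.
by rewrite hu hv mulrDr !mulrA [a * _]mulrC.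
Qed.

Lemma cong_prod K (I : Type) (r : seq I) (F Gsm : I -> {poly int}) :
  (forall i, cong K (F i) (Gsm i)) -> cong K (\prod_(i <- r) F i) (\prod_(i <- r) Gsm i).
Proof.
move=> h; elim: r => [|x r IH]; first by rewrite !big_nil; exact: cong_refl.
by rewrite !big_cons; apply: cong_mul.
Qed.

Lemma cong_coef K a b i : cong K a b -> (i < K)%N -> a`_i = b`_i.
Proof.
case=> c h lt; apply/eqP; rewrite -subr_eq0 -coefB h coefXnM lt //.
Qed.

Lemma cong_le K K' a b : (K' <= K)%N -> cong K a b -> cong K' a b.
Proof.
move=> le [c h]; exists ('X^(K - K') * c); rewrite h mulrA -exprD subnKC //.
Qed.

Lemma cong_X K esh : (K <= esh)%N -> cong K ('X^esh) 0.
Proof. by move=> le; exists 'X^(esh - K); rewrite subr0 -exprD subnKC. Qed.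

Lemma cong_add K a b c d : cong K a b -> cong K c d -> cong K (a + c) (b + d).
Proof.
case=> u hu [v hv]; exists (u + v).
have -> : a + c - (b + d) = (a - b) + (c - d) by ring.
by rewrite hu hv mulrDr.
Qed.

Lemma cong_sum K (I : Type) (r : seq I) (P : pred I) (F Gsm : I -> {poly int}) :
  (forall i, P i -> cong K (F i) (Gsm i)) ->
  cong K (\sum_(i <- r | P i) F i) (\sum_(i <- r | P i) Gsm i).
Proof.
move=> h; elim: r => [|x r IH]; first by rewrite !big_nil; exact: cong_refl.
rewrite !big_cons; case: ifP => // Px; exact: cong_add (h _ Px) IH.
Qed.

Lemma cong_scal K a b c : cong K a b -> cong K (c * a) (c * b).
Proof. move=> h; exact: cong_mul (cong_refl _ _) h. Qed.

Definition Tsh (n k : nat) : {poly int} := \prod_(k <= i < n) (1 - 'X^(i.+1)).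
Definition esh (n k : nat) : nat := (n * k + 'C(k.+1, 2))%N.
Definition Ssh (n : nat) : {poly int} :=
  \sum_(0 <= k < n.+1) (-1) ^+ k * Tsh n k * 'X^(esh n k).
Definition pa (j : nat) : nat := (j * j + 'C(j.+1, 2))%N.
Definition pb (j : nat) : nat := (j * j + 'C(j, 2))%N.
Definition Pent (n : nat) : {poly int} :=
  \sum_(0 <= j < n.+1) (-1) ^+ j * ('X^(pa j) + (0 < j)%N%:R * 'X^(pb j)).

Lemma T_nn n : Tsh n n = 1.
Proof. by rewrite /Tsh big_geq. Qed.

Lemma T_recr n k : (k <= n)%N -> Tsh n.+1 k = Tsh n k * (1 - 'X^(n.+1)).
Proof. by move=> le; rewrite /Tsh big_nat_recr. Qed.

Lemma T_recl n k : (k < n)%N -> Tsh n k = (1 - 'X^(k.+1)) * Tsh n k.+1.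
Proof. by move=> lt; rewrite /Tsh big_ltn. Qed.

Lemma e_shift n k : esh n k.+1 = (esh n.+1 k + n.+1)%N.
Proof. rewrite /esh binS bin1; lia. Qed.

Lemma e_succ n k : esh n.+1 k = (esh n k + k)%N.
Proof. rewrite /esh; lia. Qed.

Lemma S_rec n : Ssh n.+1 = Ssh n + (-1) ^+ n.+1 * ('X^(pa n.+1) + 'X^(pb n.+1)).
Proof.
set U := \sum_(0 <= k < n.+1) (-1) ^+ k * Tsh n k * 'X^(esh n.+1 k).
set V := \sum_(0 <= k < n.+1) (-1) ^+ k * Tsh n k * 'X^(esh n.+1 k + n.+1).
have hSU : Ssh n - U = - V + (-1) ^+ n * 'X^(esh n.+1 n + n.+1).
  rewrite /Ssh /U -sumrB big_nat_recl // e_succ addn0 subrr add0r.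
  rewrite /V big_nat_recr //= T_nn mulr1 opprD addrC addrA addrAC subrr add0r -sumrN.
  apply: eq_big_nat => k /andP [_ lt].
  rewrite e_succ e_shift (T_recl lt) exprS exprD !exprD; ring.
rewrite /Ssh big_nat_recr //= T_nn mulr1.
have -> : \sum_(0 <= i < n.+1) (-1) ^+ i * Tsh n.+1 i * 'X^(esh n.+1 i) = U - V.
  rewrite /U /V -sumrB; apply: eq_big_nat => k /andP [_ lt].
  by rewrite T_recr // exprD; ring.
have -> : U - V = Ssh n + (-1) ^+ n.+1 * 'X^(esh n.+1 n + n.+1).
  have -> : U = Ssh n + V - (-1) ^+ n * 'X^(esh n.+1 n + n.+1).
    by rewrite -[Ssh n](subrK U) hSU; ring.
  rewrite exprS; ring.
have -> : (esh n.+1 n + n.+1)%N = pb n.+1 by rewrite /esh /pb binS bin1; lia.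
have -> : esh n.+1 n.+1 = pa n.+1 by rewrite /esh /pa.
rewrite /Ssh.
ring.
Qed.

Lemma S_Pent n : Ssh n = Pent n.
Proof.
elim: n => [|n IH].
  by rewrite /Ssh /Pent !big_nat1 T_nn /esh /pa /= !expr0 mul0r addr0 !mulr1.
rewrite S_rec IH /Pent [in RHS]big_nat_recr //=.
by rewrite mul1r.
Qed.

Lemma bin2S2 j : (2 * 'C(j.+1, 2) = j.+1 * j)%N.
Proof. elim: j => [//|j IH]; rewrite binS bin1; lia. Qed.

Lemma pa2 j : (2 * pa j = 3 * j ^ 2 + j)%N.
Proof. rewrite /pa mulnDr bin2S2; lia. Qed.

Lemma pb2 j : (2 * pb j = 3 * j ^ 2 - j)%N.
Proof.
rewrite /pb mulnDr; case: j => [//|j]; rewrite bin2S2; lia.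
Qed.

Lemma pent_idxE (t j : nat) :
  pent_idx t%:Z j = (0 < j)%N && ((t == pa j) || (t == pb j)).
Proof.
rewrite /pent_idx -PoszM !eqz_nat -pa2 -pb2.
by rewrite !eqn_mul2l.
Qed.

Lemma pa_gt0 j : (0 < j)%N -> (0 < pa j)%N.
Proof. by case: j => // j _; rewrite /pa. Qed.
Lemma pb_gt0 j : (0 < j)%N -> (0 < pb j)%N.
Proof. by case: j => // j _; rewrite /pb. Qed.
Lemma pa_ge j : (j <= pa j)%N.
Proof. rewrite /pa; case: j => // j; nia. Qed.
Lemma pb_ge j : (j <= pb j)%N.
Proof. rewrite /pb; case: j => // j; nia. Qed.

Lemma pa_neq_pb j : (0 < j)%N -> pa j != pb j.
Proof.
move=> j0; apply/eqP => h; have := pa2 j; have := pb2 j; rewrite h; lia.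
Qed.

Lemma pent_uniq t j k : (0 < j)%N -> (0 < k)%N ->
  (t == pa j) || (t == pb j) -> (t == pa k) || (t == pb k) -> j = k.
Proof.
move=> j0 k0 hj hk.
have hj2 : (2 * t = 3 * j ^ 2 + j \/ 2 * t = 3 * j ^ 2 - j)%N.
  by case/orP: hj => /eqP ->; [left; rewrite pa2 | right; rewrite pb2].
have hk2 : (2 * t = 3 * k ^ 2 + k \/ 2 * t = 3 * k ^ 2 - k)%N.
  by case/orP: hk => /eqP ->; [left; rewrite pa2 | right; rewrite pb2].
have hj3 : (j <= 3 * j ^ 2)%N by nia.
have hk3 : (k <= 3 * k ^ 2)%N by nia.
case: (ltngtP j k) => // [lt|lt]; exfalso.
- have : (3 * j ^ 2 + j + 1 <= 3 * k ^ 2 - k)%N.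
    have : (j.+1 <= k)%N by [].
    move=> h; have : (3 * j.+1 ^ 2 - j.+1 <= 3 * k ^ 2 - k)%N.
      clear -h; elim: k h => [//|k IH]; rewrite leq_eqVlt => /orP [/eqP <- //|h].
      apply: leq_trans (IH h) _; nia.
    nia.
  nia.
- have : (3 * k ^ 2 + k + 1 <= 3 * j ^ 2 - j)%N.
    have : (k.+1 <= j)%N by [].
    move=> h; have : (3 * k.+1 ^ 2 - k.+1 <= 3 * j ^ 2 - j)%N.
      clear -h; elim: j h => [//|j IH]; rewrite leq_eqVlt => /orP [/eqP <- //|h].
      apply: leq_trans (IH h) _; nia.
    nia.
  nia.
Qed.

Lemma coef_sign j (p : {poly int}) t : ((-1) ^+ j * p)`_t = (-1) ^+ j * p`_t.
Proof.
have -> : (-1) ^+ j = ((-1) ^+ j)%:P :> {poly int} by rewrite rmorphXn rmorphN1.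
by rewrite coefCM.
Qed.

Lemma Pent_term j t : (0 < t)%N ->
  ((-1) ^+ j * ('X^(pa j) + (0 < j)%N%:R * 'X^(pb j)) : {poly int})`_t =
  if (0 < j)%N && ((t == pa j) || (t == pb j)) then (-1) ^+ j else 0.
Proof.
move=> t0; rewrite coef_sign coefD mulr_natl coefMn !coefXn.
case: j => [|j] /=.
  by rewrite mulr0n addr0 /pa /=; case: t t0.
rewrite mulr1n.
have hne := pa_neq_pb (isT : (0 < j.+1)%N).
case: (t =P pa j.+1) => [->|_].
  by rewrite (negbTE hne) addr0 mulr1.
by case: (t == pb j.+1); rewrite ?add0r ?mulr1 ?mulr0.
Qed.

Lemma omega_pos t : (0 < t)%N ->
  omega t%:Z = match [pick j : 'I_t.+1 | pent_idx t%:Z j] with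
               | Some j => (-1) ^+ (nat_of_ord j) | None => 0 end.
Proof. by case: t. Qed.

Lemma Pent_coef n t : (t <= n)%N -> (Pent n)`_t = omega t%:Z.
Proof.
move=> le; rewrite /Pent coef_sum.
case: t le => [|t] le.
  rewrite big_nat_recl // big1 ?addr0.
    by rewrite /pa /= mul0r addr0 expr0 mul1r coefXn.
  move=> j _; rewrite coef_sign coefD mulr_natl coefMn !coefXn /=.
  have h1 := pa_gt0 (isT : (0 < j.+1)%N); have h2 := pb_gt0 (isT : (0 < j.+1)%N).
  by rewrite add0r mul0rn mulr0.
rewrite omega_pos //.
under eq_big_nat => j _ do rewrite Pent_term //.
case: pickP => [j0 hj0|hn].
  have hj0' := hj0; rewrite pent_idxE in hj0'.
  transitivity (\sum_(0 <= j < n.+1) (if j == nat_of_ord j0 then (-1) ^+ j0 else 0) : int).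
    apply: eq_big_nat => j _.
    case: ifP => hj; case: ifP => /eqP hjj //.
    - by rewrite hjj.
    - case/andP: hj => j0' hj; case/andP: hj0' => j00 hj0'.
      by case: hjj; apply: pent_uniq hj hj0'.
    - by move: hj; rewrite hjj hj0'.
  rewrite -big_mkcond big_nat1_eq /=.
  have : (j0 < t.+2)%N by [].
  by move=> lt; rewrite (leq_trans lt) //.
rewrite big1_seq // => j /andP [_]; rewrite mem_index_iota => /andP [_ ltj].
case: ifP => // hj.
have ljt : (j < t.+2)%N.
  case/andP: hj => _ /orP [] /eqP ->; rewrite ltnS ?pa_ge ?pb_ge //.
have := hn (Ordinal ljt); rewrite /= pent_idxE hj //.
Qed.

Lemma omega_neg (m : int) : m < 0 -> omega m = 0.
Proof.
move=> m0; rewrite /omega (negbTE (ltr0_neq0 m0)).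
case: pickP => // j; rewrite /pent_idx => /andP [_ /orP [] /eqP h];
  have : 2 * m < 0 by rewrite pmulr_rlt0.
all: by rewrite h.
Qed.

Definition Gsm (n i : nat) : {poly int} := \sum_(j < n.+1) 'X^(i.+1 * j).
Definition Hpr (n m : nat) : {poly int} := \prod_(i < m) Gsm n i.
Definition pcount (k : nat) : nat :=
  #|[set f : {ffun 'I_k -> 'I_k.+1} | is_partition f]|.

Lemma EH_cong n : cong n.+1 (Tsh n 0 * Hpr n n) 1.
Proof.
rewrite /Tsh /Hpr big_mkord -big_split /=.
apply: (@cong_trans _ _ (\prod_(i < n) (1 : {poly int}))); last first.
  by rewrite big1 //; exact: cong_refl.
apply: cong_prod => i.
have -> : (1 - 'X^(i.+1)) * Gsm n i = 1 - 'X^(i.+1 * n.+1).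
  rewrite /Gsm exprM.
  have := subrX1 ('X^(i.+1) : {poly int}) n.+1.
  under [X in _ = _ * X]eq_bigr => j _ do rewrite -exprM.
  move=> h; rewrite -[LHS]opprK -mulNr opprB -h opprB //.
have le : (n.+1 <= i.+1 * n.+1)%N by rewrite leq_pmull.
exists (- 'X^(i.+1 * n.+1 - n.+1)); rewrite mulrN -exprD subnKC //.
by rewrite addrAC subrr add0r.
Qed.

Lemma cong_prodP K (I : Type) (r : seq I) (P : pred I) (F Gsm : I -> {poly int}) :
  (forall i, P i -> cong K (F i) (Gsm i)) ->
  cong K (\prod_(i <- r | P i) F i) (\prod_(i <- r | P i) Gsm i).
Proof.
move=> h; elim: r => [|x r IH]; first by rewrite !big_nil; exact: cong_refl.
by rewrite !big_cons; case: ifP => // Px; apply: cong_mul => //; apply: h.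
Qed.

Lemma G_cong_lo n k i : (k <= n)%N -> cong k.+1 (Gsm n i) (Gsm k i).
Proof.
move=> le; rewrite /Gsm -!(big_mkord xpredT (fun j => 'X^(i.+1 * j))).
rewrite (big_cat_nat _ (n := k.+1)) //=.
rewrite -[X in cong _ _ X]addr0; apply: cong_add; first exact: cong_refl.
rewrite big_seq_cond [X in cong _ _ X](_ : 0 = \sum_(j <- index_iota k.+1 n.+1 | (j \in index_iota k.+1 n.+1) && true) 0); last by rewrite big1.
apply: cong_sum => j; rewrite andbT mem_index_iota => /andP [hj _].
apply: cong_X; apply: leq_trans hj _; exact: leq_pmull.
Qed.

Lemma G_cong_hi n k i : (k <= i)%N -> cong k.+1 (Gsm n i) 1.
Proof.
move=> le; rewrite /Gsm big_ord_recl /= muln0 expr0.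
rewrite -[X in cong _ _ X]addr0; apply: cong_add; first exact: cong_refl.
rewrite [X in cong _ _ X](_ : 0 = \sum_(j < n) 0); last by rewrite big1.
apply: cong_sum => j _; apply: cong_X.
rewrite /bump /= add1n; apply: leq_trans (leq_pmulr _ _) => //.
Qed.

Lemma H_cong n k : (k <= n)%N -> cong k.+1 (Hpr n n) (Hpr k k).
Proof.
move=> le; rewrite /Hpr -!(big_mkord xpredT (Gsm _)).
rewrite (big_cat_nat _ (n := k)) //= -[X in cong _ _ X]mulr1.
apply: cong_mul.
  by apply: cong_prod => i; apply: G_cong_lo.
rewrite big_seq_cond [X in cong _ _ X](_ : 1 = \prod_(j <- index_iota k n | (j \in index_iota k n) && true) 1); last by rewrite big1.
apply: cong_prodP => j; rewrite andbT mem_index_iota => /andP [hj _].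
exact: G_cong_hi.
Qed.

Lemma Hkk_coef k : (Hpr k k)`_k = (pcount k)%:R.
Proof.
rewrite /Hpr /Gsm.
rewrite (bigA_distr_bigA (fun (i : 'I_k) (j : 'I_k.+1) => ('X^(i.+1 * j) : {poly int}))) /=.
under eq_bigr => f _ do rewrite prodrXr.
rewrite coef_sum.
under eq_bigr => f _ do rewrite coefXn.
rewrite -natr_sum /pcount cardsE -sum1_card /=.
congr (_ %:R); rewrite [RHS]big_mkcond; apply: eq_bigr => f _; rewrite eq_sym.
rewrite unfold_in /=; case: ifP => [/eqnP -> | /eqnP /eqP /negbTE ->]; by rewrite ?eqxx.
Qed.

Lemma S_cong n : cong n.+1 (Ssh n) (Tsh n 0).
Proof.
rewrite /Ssh big_nat_recl //= /esh muln0 expr0 mulr1 mul1r.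
rewrite -[X in cong _ _ X]addr0; apply: cong_add; first exact: cong_refl.
rewrite [X in cong _ _ X](_ : 0 = \sum_(0 <= j < n) 0); last by rewrite big1.
apply: cong_sum => j _.
rewrite -[X in cong _ _ X](mulr0 ((-1) ^+ j.+1 * Tsh n j.+1)).
apply: cong_scal; apply: cong_X.
rewrite binS bin1; nia.
Qed.

Lemma E_coef n i : (i <= n)%N -> (Tsh n 0)`_i = omega i%:Z.
Proof.
move=> le; rewrite -(Pent_coef le) -S_Pent.
by apply/esym/cong_coef; [exact: S_cong|].
Qed.

Lemma H_coef n k : (k <= n)%N -> (Hpr n n)`_k = (pcount k)%:R.
Proof.
move=> le; rewrite -Hkk_coef; apply: cong_coef (H_cong le) _; done.
Qed.

Lemma euler n : (0 < n)%N ->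
  \sum_(i < n.+1) omega i%:Z * (pcount (n - i))%:R = 0.
Proof.
move=> n0.
have := cong_coef (EH_cong n) (ltnSn n).
rewrite coefC (gtn_eqF n0) coefM => h; rewrite -[RHS]h.
apply: eq_bigr => i _; rewrite (E_coef (n:=n)) ?(H_coef (n:=n)); [by [] | exact: leq_subr | by rewrite -ltnS].
Qed.

Local Close Scope ring_scope.

Lemma big_mult (R : Type) (idx : R) (op : Monoid.law idx) (d m : nat) (F : nat -> R) :
  (0 < d) -> (forall j, ~~ (d %| j.+1) -> F j = idx) ->
  \big[op/idx]_(0 <= j < m * d) F j = \big[op/idx]_(0 <= l < m) F (l * d + d.-1).
Proof.
case: d => // d' _ hF; elim: m => [|m IH]; first by rewrite mul0n !big_geq.
rewrite big_nat_recr //= -IH mulSn addnC (big_cat_nat _ (n := m * d'.+1)) //=; last by rewrite leq_addr.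
congr (op _ _).
rewrite addnS big_nat_recr ?leq_addr //= big1_seq ?Monoid.simpm // => j.
rewrite mem_index_iota => /andP [h1 h2]; apply: hF; apply/negP => hd.
have : (d'.+1 %| j.+1 - m * d'.+1) by rewrite dvdn_sub ?dvdn_mull.
move/dvdn_leq; lia.
Qed.

Definition fv (k : nat) (f : {ffun 'I_k -> 'I_k.+1}) (j : nat) : nat :=
  match (insub j : option 'I_k) with Some i => nat_of_ord (f i) | None => 0 end.

Lemma fvE k (f : {ffun 'I_k -> 'I_k.+1}) (i : 'I_k) : fv f i = f i.
Proof. by rewrite /fv valK. Qed.

Lemma fv_ge k (f : {ffun 'I_k -> 'I_k.+1}) j : k <= j -> fv f j = 0.
Proof. by move=> le; rewrite /fv insubN // -leqNgt. Qed.

Lemma fv_le k (f : {ffun 'I_k -> 'I_k.+1}) j : fv f j <= k.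
Proof. by rewrite /fv; case: insubP => // i _ _; rewrite -ltnS. Qed.

Definition psum k (f : {ffun 'I_k -> 'I_k.+1}) := \sum_(i < k) i.+1 * f i.

Lemma psumE k (f : {ffun 'I_k -> 'I_k.+1}) : psum f = \sum_(0 <= j < k) j.+1 * fv f j.
Proof. by rewrite big_mkord; apply: eq_bigr => i _; rewrite fvE. Qed.

Lemma gcdE k (f : {ffun 'I_k -> 'I_k.+1}) :
  parts_gcd f = \big[gcdn/0]_(0 <= j < k) (if 0 < fv f j then j.+1 else 0).
Proof. by rewrite /parts_gcd big_mkcond big_mkord; apply: eq_bigr => i _; rewrite fvE. Qed.

Lemma term_le k (f : {ffun 'I_k -> 'I_k.+1}) j : j.+1 * fv f j <= psum f.
Proof.
case: (ltnP j k) => [lt|ge]; last by rewrite fv_ge // muln0.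
have := fvE f (Ordinal lt); rewrite /= => ->.
by rewrite /psum (bigD1 (Ordinal lt)) //= leq_addr.
Qed.

Lemma gcd_dvd k (f : {ffun 'I_k -> 'I_k.+1}) j : 0 < fv f j -> parts_gcd f %| j.+1.
Proof.
case: (ltnP j k) => [lt|ge]; last by rewrite fv_ge.
have := fvE f (Ordinal lt); rewrite /= => -> h.
by rewrite /parts_gcd (bigD1 (Ordinal lt)) //= dvdn_gcdl.
Qed.

Section Phi.
Variables (m d : nat).
Hypothesis d0 : 0 < d.

Definition phi (h : {ffun 'I_m -> 'I_m.+1}) : {ffun 'I_(m * d) -> 'I_(m * d).+1} :=
  [ffun i : 'I_(m * d) => inord (if d %| i.+1 then fv h (i.+1 %/ d).-1 else 0)].

Lemma succ_div l : (l * d + d.-1).+1 %/ d = l.+1.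
Proof. by rewrite -addnS prednK // addnC -mulSn mulnK. Qed.

Lemma fv_phi h j : fv (phi h) j = if d %| j.+1 then fv h (j.+1 %/ d).-1 else 0.
Proof.
case: (ltnP j (m * d)) => [lt|ge].
  have := fvE (phi h) (Ordinal lt); rewrite /= => ->.
  rewrite ffunE inordK //; case: ifP => // _; rewrite ltnS.
  apply: leq_trans (fv_le _ _) _; exact: leq_pmulr.
rewrite fv_ge //; case: ifP => // /dvdnP [q hq].
rewrite fv_ge // hq mulnK //.
have : m * d < q * d by rewrite -hq.
rewrite ltn_pmul2r //; case: q {hq} => //.
Qed.

Lemma fv_phi_l h l : fv (phi h) (l * d + d.-1) = fv h l.
Proof.
rewrite fv_phi succ_div /=; case: ifP => // /negP []; rewrite -addnS prednK //.
by rewrite addnC -mulSn dvdn_mull.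
Qed.

Lemma psum_phi h : psum (phi h) = d * psum h.
Proof.
rewrite !psumE (big_mult addn _ d0); last first.
  by move=> j hj; rewrite fv_phi (negbTE hj) muln0.
rewrite big_distrr /=; apply: eq_big_nat => l _.
rewrite fv_phi_l -addnS prednK // addnC -mulSn; lia.
Qed.

Lemma gcd_phi h : parts_gcd (phi h) = d * parts_gcd h.
Proof.
rewrite !gcdE (big_mult gcdn _ d0); last first.
  by move=> j hj; rewrite fv_phi (negbTE hj).
rewrite (big_morph (muln d) (muln_gcdr d) (muln0 d)).
apply: eq_big_nat => l _.
rewrite fv_phi_l -addnS prednK // addnC -mulSn; case: ifP => _; lia.
Qed.

Lemma phi_inj : injective phi.
Proof.
move=> h1 h2 esh; apply/ffunP => l; apply/ord_inj.
by have := fv_phi_l h1 l; rewrite esh fv_phi_l !fvE.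
Qed.

End Phi.

Lemma partE k (f : {ffun 'I_k -> 'I_k.+1}) : is_partition f = (psum f == k).
Proof. by []. Qed.

Section Psi.
Variables (m d : nat).
Hypothesis d0 : 0 < d.

Definition psi (f : {ffun 'I_(m * d) -> 'I_(m * d).+1}) : {ffun 'I_m -> 'I_m.+1} :=
  [ffun l : 'I_m => inord (fv f (l * d + d.-1))].

Lemma fv_psi f l : psum f = m * d -> fv (psi f) l = fv f (l * d + d.-1).
Proof.
move=> hs; case: (ltnP l m) => [lt|ge].
  have := fvE (psi f) (Ordinal lt); rewrite /= => ->.
  rewrite ffunE inordK //= ltnS.
  have := term_le f (l * d + d.-1); rewrite hs -addnS prednK // addnC -mulSn.
  move: (fv f _) => x h; nia.
rewrite fv_ge // fv_ge //; apply: leq_trans (leq_addr _ _); exact: leq_mul.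
Qed.

Lemma phi_psi f : psum f = m * d -> parts_gcd f = d -> phi d (psi f) = f.
Proof.
move=> hs hg; apply/ffunP => i; apply/ord_inj.
rewrite -!fvE fv_phi //; case: ifP => hd.
  rewrite fv_psi //; congr (fv f _); case/dvdnP: hd => q hq.
  rewrite hq mulnK //; case: q hq => [|q] hq //=; nia.
case: (posnP (fv f i)) => // h; exfalso.
by have := gcd_dvd h; rewrite hg hd.
Qed.

Lemma count_gcd : 0 < m ->
  #|[set f : {ffun 'I_(m * d) -> 'I_(m * d).+1} | is_partition f && (parts_gcd f == d)]| = p_psi m.
Proof.
move=> m0; rewrite /p_psi -[RHS](card_imset _ (@phi_inj m d d0)).
apply: eq_card => f; rewrite [in LHS]inE; apply/idP/imsetP.
  rewrite partE => /andP [/eqP hs /eqP hg]; exists (psi f); last by rewrite phi_psi.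
  rewrite inE partE; apply/andP; split.
    by rewrite -(eqn_pmul2l d0) -psum_phi // phi_psi // hs mulnC.
  by rewrite -(eqn_pmul2l d0) -gcd_phi // phi_psi // hg muln1.
case=> h; rewrite inE partE => /andP [/eqP hs /eqP hg] ->.
by rewrite partE psum_phi // gcd_phi // hs hg muln1 mulnC !eqxx.
Qed.

End Psi.


Lemma count_gcd' k m d : 0 < d -> 0 < m -> k = m * d ->
  #|[set f : {ffun 'I_k -> 'I_k.+1} | is_partition f && (parts_gcd f == d)]| = p_psi m.
Proof. by move=> d0 m0 hk; subst k; apply: count_gcd. Qed.

Lemma gcd_dvd_k k (f : {ffun 'I_k -> 'I_k.+1}) : is_partition f -> parts_gcd f %| k.
Proof.
rewrite partE => /eqP hs; rewrite -[X in _ %| X]hs psumE; apply: dvdn_sum => j _.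
case: (posnP (fv f j)) => [->|h]; first by rewrite muln0.
by apply: dvdn_mulr; apply: gcd_dvd.
Qed.

Lemma pcount_div k : 0 < k ->
  pcount k = \sum_(0 <= m < k.+1 | (0 < m) && (m %| k)) p_psi m.
Proof.
move=> k0; rewrite /pcount cardsE -sum1_card.
rewrite (partition_big (fun f => (inord (k %/ parts_gcd f) : 'I_k.+1)) xpredT) //=.
rewrite big_mkord [RHS]big_mkcond /=; apply: eq_bigr => j _.
case: ifP => [/andP [j0 jk]|hj].
  case/dvdnP: jk => d hd.
  have d0 : 0 < d by move: hd k0; case: d => //= ->.
  rewrite sum1_card -(count_gcd' d0 j0 (etrans hd (mulnC _ _))).
  apply: eq_card => f; rewrite inE !unfold_in /= -[eqn _ k]/(is_partition f).
  case hp: (is_partition f) => //=.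
  have hg := gcd_dvd_k hp; have g0 : 0 < parts_gcd f.
    by move: hg; case: (parts_gcd f) => //; rewrite dvd0n => /eqP h; rewrite h in k0.
  have hle : k %/ parts_gcd f <= k by apply: leq_div.
  apply/eqP/eqP => [h|hg'].
    have hq : k %/ parts_gcd f = j by rewrite -h inordK ?ltnS.
    by apply/eqP; rewrite -(eqn_pmul2l j0) -{1}hq divnK // [X in _ == X]mulnC -hd eqxx.
  apply/eqP; rewrite -val_eqE /= inordK ?ltnS // hg'; apply/eqP; move: (nat_of_ord j) hd => jj ->; exact: mulKn.
rewrite big1_seq // => f /andP [/andP [hp /eqP hj'] _]; exfalso; move: hj.
move: hp; rewrite unfold_in /= -[eqn _ k]/(is_partition f) => hp.
have hg := gcd_dvd_k hp; have g0 : 0 < parts_gcd f.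
  by move: hg; case: (parts_gcd f) => //; rewrite dvd0n => /eqP h; rewrite h in k0.
have hle : k %/ parts_gcd f <= k by apply: leq_div.
move=> /negP []; rewrite -hj' inordK ?ltnS //.
by rewrite (divn_gt0 _ g0) (dvdn_leq k0 hg) (dvdn_div hg).
Qed.

Local Open Scope ring_scope.

Lemma Omega_rec m k : (0 < m)%N ->
  Omega m k%:Z = omega k%:Z + (if (m <= k)%N then Omega m (k - m)%N%:Z else 0).
Proof.
move=> m0; rewrite /Omega /= big_nat_recl // mul0n subr0; congr (_ + _).
case: ifP => hmk.
  rewrite /= (big_cat_nat _ (n := (k - m).+1)) //=; last by lia.
  rewrite [X in _ + X]big1_seq ?addr0; last first.
    move=> j; rewrite mem_index_iota => /andP [h1 h2]; apply: omega_neg.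
    rewrite subr_lt0 ltz_nat; nia.
  apply: eq_big_nat => j _; congr omega.
  rewrite -subzn // mulSn PoszD; ring.
rewrite big1_seq // => j _; apply: omega_neg; rewrite subr_lt0 ltz_nat; nia.
Qed.

Definition Dsm (m N : nat) : int := \sum_(0 <= i < N) (m %| N - i)%N%:R * omega i%:Z.

Lemma not_dvd_small m x : (0 < x)%N -> (x < m)%N -> ~~ (m %| x)%N.
Proof. by move=> x0 xm; apply/negP => /(dvdn_leq x0); rewrite leqNgt xm. Qed.

Lemma D_small m N : (0 < m)%N -> (N < m)%N -> Dsm m N = 0.
Proof.
move=> m0 Nm; rewrite /Dsm big1_seq // => i; rewrite mem_index_iota => /andP [_ h].
by rewrite (negbTE (@not_dvd_small m (N - i) _ _)) ?mul0r //; lia.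
Qed.

Lemma D_rec m N : (0 < m)%N -> (m <= N)%N -> Dsm m N = omega (N - m)%N%:Z + Dsm m (N - m).
Proof.
move=> m0 mN; rewrite /Dsm (big_cat_nat _ (n := N - m)) //=; last by lia.
rewrite addrC; congr (_ + _).
  rewrite big_ltn; last by lia.
  rewrite subKn // dvdnn mul1r big1_seq ?addr0 // => i.
  rewrite mem_index_iota => /andP [h1 h2].
  by rewrite (negbTE (@not_dvd_small m (N - i) _ _)) ?mul0r //; lia.
apply: eq_big_nat => i /andP [_ hi].
have -> : (N - i = (N - m - i) + m)%N by lia.
by rewrite dvdn_addl.
Qed.

Lemma Omega_D m N : (0 < m)%N -> (m <= N)%N -> Omega m (N - m)%N%:Z = Dsm m N.
Proof.
move=> m0; elim/ltn_ind: N => N IH mN.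
rewrite Omega_rec // D_rec //; congr (_ + _).
case: ifP => h.
  rewrite IH //; lia.
rewrite D_small //; lia.
Qed.

Lemma pcount0 : pcount 0 = 1%N.
Proof.
rewrite /pcount.
have -> : [set f : {ffun 'I_0 -> 'I_1} | is_partition f] = setT.
  by apply/setP => f; rewrite !inE /is_partition big_ord0.
by rewrite cardsT card_ffun !card_ord expn0.
Qed.

Lemma pcount_sum n k : (0 < k)%N -> (k <= n)%N ->
  (pcount k)%:R = \sum_(1 <= m < n.+1) (m %| k)%N%:R * (p_psi m)%:R :> int.
Proof.
move=> k0 kn; rewrite pcount_div // natr_sum.
set P := fun m => ((0 < m) && (m %| k))%N.
have -> : \sum_(0 <= m < k.+1 | P m) (p_psi m)%:R = \sum_(0 <= m < n.+1 | P m) (p_psi m)%:R :> int.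
  rewrite [RHS](big_cat_nat _ (n := k.+1)) //=.
  rewrite [X in _ = _ + X]big1_seq ?addr0 //.
  move=> m /andP [/andP [m0 mk]]; rewrite mem_index_iota => /andP [h1 h2].
  by move: (dvdn_leq k0 mk); rewrite leqNgt h1.
rewrite big_mkcond big_nat_recl // big_add1 /= add0r.
apply: eq_big_nat => m _; rewrite /P /=.
by case: (m.+1 %| k)%N; rewrite ?mul1r ?mul0r.
Qed.

Theorem mainTheorem8 (n : nat) (hn : (1 <= n)%N) :
  - omega n%:Z =
  \sum_(1 <= m < n.+1) (p_psi m)%:Z * Omega m (n - m)%N%:Z.
Proof.
have he := euler hn.
rewrite big_ord_recr /= subnn pcount0 in he.
have -> : - omega n%:Z = \sum_(i < n) omega i%:Z * (pcount (n - i))%:R.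
  by rewrite -sub0r -[X in X - omega _]he mulr1 addrK.
rewrite -(big_mkord xpredT (fun i => omega i%:Z * (pcount (n - i))%:R)).
transitivity (\sum_(0 <= i < n) omega i%:Z * \sum_(1 <= m < n.+1) (m %| n - i)%N%:R * (p_psi m)%:R).
  apply: eq_big_nat => i /andP [_ hi]; rewrite (pcount_sum (n := n)) //; lia.
transitivity (\sum_(1 <= m < n.+1) (p_psi m)%:Z * Dsm m n); last first.
  apply: eq_big_nat => m /andP [h1 h2]; rewrite Omega_D //; lia.
under eq_big_nat => i _ do rewrite big_distrr.
rewrite exchange_big_nat; apply: eq_big_nat => m _.
rewrite /Dsm big_distrr; apply: eq_big_nat => i _.
rewrite /= !natz; ring.
Qed.
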